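(* Let $\mu>0$, let $V^{*}_{\mu}$ be a fixed point of the quasi-optimal Bellman operator $\mathcal{B}_{\mu}$, and let $Q^{*}_{\mu}(s,a)=\mathbb{E}_{S'\sim\mathbf{P}(\cdot\mid s,a)}[R(S',s,a)+\gamma V^{*}_{\mu}(S')]$. Suppose that for each $s$ the supremum defining $\mathcal{B}_{\mu}V^{*}_{\mu}(s)$ is attained by the induced policy $\pi^{*}_{\mu}(\cdot\mid s)\in\Pi_{\mathbf{C}}$ of the form $$\pi^{*}_{\mu}(a\mid s)=\Big(\frac{Q^{*}_{\mu}(s,a)}{2\mu}-\frac{\int_{\mathcal{W}_s}Q^{*}_{\mu}(s,a')\,da'}{2\mu\,\sigma(\mathcal{W}_s)}+\frac{1}{\sigma(\mathcal{W}_s)}\Big)^{+},$$ where $\mathcal{W}_s$ is the support of $\pi^{*}_{\mu}(\cdot\mid s)$. Then there exist functions $\eta:\mathcal{S}\to[-\mu\mathbf{C},0]$ and $\varpi:\mathcal{S}\times\mathcal{A}\to[0,\infty)$ with $\varpi(s,a)\,\pi^{*}_{\mu}(a\mid s)=0$ for all $(s,a)$, such that for every $s\in\mathcal{S}$, $a\in\mathcal{A}$, $$\mathbb{E}_{S'\sim\mathbf{P}(\cdot\mid s,a)}\big[R(S',s,a)+\gamma V^{*}_{\mu}(S')\big]-\mu\big(2\pi^{*}_{\mu}(a\mid s)-1\big)-\eta(s)+\varpi(s,a)=V^{*}_{\mu}(s).$$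
   Context: Consider a Markov decision process with state space $\mathcal{S}$, continuous action space $\mathcal{A}\subseteq\mathbb{R}$ ($\sigma$ = Lebesgue measure), transition kernel $\mathbf{P}$, bounded reward $R(s',s,a)$, discount $\gamma\in[0,1)$. $\Pi_{\mathbf{C}}$ is the class of conditional densities $\pi(\cdot\mid s)$ on $\mathcal{A}$ with $\pi(a\mid s)\le\mathbf{C}$ for all $s,a$ (standing assumption: all policies lie in $\Pi_{\mathbf{C}}$). For bounded $V$, $Q_V(s,a)=\mathbb{E}_{S'\sim\mathbf{P}(\cdot\mid s,a)}[R(S',s,a)+\gamma V(S')]$ and $\mathcal{B}_{\mu}V(s)=\sup_{\pi\in\Pi_{\mathbf{C}}}\int_{\mathcal{A}}[Q_V(s,a)\pi(a\mid s)+\mu(\pi(a\mid s)-\pi(a\mid s)^2)]\,da$. $x^+=\max(x,0)$. *)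

(* Defs.v *)
From HB Require Import structures.
From mathcomp Require Import all_boot all_order all_algebra.
From mathcomp Require Import all_classical all_reals all_analysis.
From mathcomp Require Import measurable_realfun.
Set Implicit Arguments.
Unset Strict Implicit.
Unset Printing Implicit Defensive.
Import Order.TTheory GRing.Theory Num.Theory.
Import numFieldNormedType.Exports.

Local Open Scope classical_set_scope.
Local Open Scope ring_scope.

Definition Qfun (R : realType) (d : measure_display) (S : measurableType d)
  (P : S -> R -> probability S R) (r : S -> S -> R -> R) (gamma : R)
  (V : S -> R) (s : S) (a : R) : R :=
  Rintegral (P s a) setT (fun s' => r s' s a + gamma * V s').

Definition in_PiC (R : realType) (d : measure_display) (S : measurableType d)
  (A : set R) (C : R) (pi : S -> R -> R) : Prop :=
  forall s, measurable_fun A (pi s) /\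
    (forall a, A a -> 0 <= pi s a <= C) /\
    (\int[@lebesgue_measure R]_(a in A) (pi s a)%:E = 1)%E.

Definition bellman_obj (R : realType) (d : measure_display) (S : measurableType d)
  (A : set R) (mu : R) (Q : S -> R -> R) (pi : S -> R -> R) (s : S) : \bar R :=
  (\int[@lebesgue_measure R]_(a in A)
      (Q s a * pi s a + mu * (pi s a - pi s a ^+ 2))%:E)%E.

Definition bellman (R : realType) (d : measure_display) (S : measurableType d)
  (P : S -> R -> probability S R) (r : S -> S -> R -> R) (gamma : R)
  (A : set R) (C mu : R) (V : S -> R) (s : S) : \bar R :=
  ereal_sup [set bellman_obj A mu (Qfun P r gamma V) pi s
            | pi in [set pi | in_PiC A C pi]].

Definition supp (R : realType) (d : measure_display) (S : measurableType d)
  (A : set R) (pi : S -> R -> R) (s : S) : set R :=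
  [set a | A a /\ 0 < pi s a].

(* Main.v *)
Require Import Defs.
From HB Require Import structures.
From mathcomp Require Import all_boot all_order all_algebra.
From mathcomp Require Import all_classical all_reals all_analysis.
From mathcomp Require Import measurable_realfun.
Import Order.TTheory GRing.Theory Num.Theory.
Import numFieldNormedType.Exports.
Local Open Scope classical_set_scope.
From mathcomp Require Import ring lra.
Local Open Scope ring_scope.


Lemma key (R : realFieldType) (mu Q I m p : R) : 0 < mu ->
  p = Num.max 0 (Q / (2 * mu) - I / (2 * mu * m) + 1 / m) ->
  (p = 0 /\ 0 <= (I / m - 2 * mu / m) - Q) \/ Q = 2 * mu * p + (I / m - 2 * mu / m).
Proof.
move=> mu0 ->.
have mun : mu != 0 by rewrite gt_eqF.
set y := _ + 1 / m.
have hy : 2 * mu * y = Q - (I / m - 2 * mu / m).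
  rewrite /y (invfM (2 * mu) m); set mi := m^-1.
  field. by rewrite mun.
case: (real_leP (num_real y) (num_real (0:R))) => hy0.
- left; split => //.
  have : 0 <= - (2 * mu * y) by rewrite oppr_ge0 pmulr_rle0 // mulr_gt0.
  by rewrite hy opprB.
- right. rewrite hy; ring.
Qed.


Theorem theorem3 (R : realType) (dS : measure_display) (S : measurableType dS)
  (A : set R) (P : S -> R -> probability S R) (r : S -> S -> R -> R)
  (gamma C mu : R) (V : S -> R) (pi : S -> R -> R) :
  measurable A ->
  (forall B, measurable B ->
     measurable_fun (setT `*` A) (fun sa : S * R => P sa.1 sa.2 B)) ->
  (forall s a, measurable_fun setT (fun s' => r s' s a)) ->
  (exists M, forall s' s a, `|r s' s a| <= M) ->
  0 <= gamma < 1 ->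
  0 < mu ->
  measurable_fun setT V ->
  (exists M, forall s, `|V s| <= M) ->
  (forall s, bellman P r gamma A C mu V s = (V s)%:E) ->
  in_PiC A C pi ->
  (forall s, bellman P r gamma A C mu V s
             = bellman_obj A mu (Qfun P r gamma V) pi s) ->
  (forall s, (lebesgue_measure (supp A pi s) < +oo)%E) ->
  (forall s, lebesgue_measure.-integrable (supp A pi s)
               (fun a => (Qfun P r gamma V s a)%:E)) ->
  (forall s a, A a ->
     pi s a = Num.max 0
       (Qfun P r gamma V s a / (2 * mu)
        - Rintegral lebesgue_measure (supp A pi s) (Qfun P r gamma V s)
            / (2 * mu * fine (lebesgue_measure (supp A pi s)))
        + 1 / fine (lebesgue_measure (supp A pi s)))) ->
  exists (eta : S -> R) (varpi : S -> R -> R),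
    (forall s, - (mu * C) <= eta s <= 0) /\
    (forall s a, A a -> 0 <= varpi s a) /\
    (forall s a, A a -> varpi s a * pi s a = 0) /\
    (forall s a, A a ->
       Qfun P r gamma V s a - mu * (2 * pi s a - 1) - eta s + varpi s a = V s).
Proof.
move=> mA _ _ _ _ mu0 _ _ hB hPi hobj _ _ hpi.
set Q := Qfun P r gamma V.
pose m s := fine (lebesgue_measure (supp A pi s)).
pose c s := Rintegral lebesgue_measure (supp A pi s) (Q s) / m s - 2 * mu / m s.
have hk : forall s a, A a ->
    (pi s a = 0 /\ 0 <= c s - Q s a) \/ Q s a = 2 * mu * pi s a + c s.
  move=> s a Aa; exact: (@key _ _ _ _ _ _ mu0 (hpi s a Aa)).
have hint : forall s, exists j, 0 <= j <= C /\ V s = c s + mu + mu * j.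
  move=> s; have [mpi [pbd p1]] := hPi s.
  have mAl : measurable (A : set (measurableTypeR R)) := mA.
  have pge0 : forall a, A a -> 0 <= pi s a by move=> a /pbd /andP[].
  have ple : forall a, A a -> pi s a <= C by move=> a /pbd /andP[].
  have ipi : (@lebesgue_measure R).-integrable A (EFin \o pi s).
    apply/integrableP; split; first exact/measurable_EFinP.

    rewrite (@eq_integral _ _ _ (@lebesgue_measure R) A (fun a => (pi s a)%:E)); first by rewrite p1 ltry.
    by move=> a /[!inE] Aa /=; rewrite ?gee0_abs ?ger0_norm ?lee_fin ?pge0.
  have ip2 : (@lebesgue_measure R).-integrable A (EFin \o (fun a => pi s a ^+ 2)).
    apply: (le_integrable mAl _ _ (integrableZl mAl C ipi)).
      by apply/measurable_EFinP; exact: measurable_funX.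
    move=> a Aa /=; rewrite lee_fin ger0_norm ?sqr_ge0 //.
    rewrite ger0_norm ?mulr_ge0 ?pge0 ?(le_trans (pge0 a Aa) (ple a Aa)) //.
    by rewrite expr2 ler_wpM2r ?pge0 ?ple.
  set J := (\int[@lebesgue_measure R]_(a in A) (pi s a ^+ 2)%:E)%E.
  have J0 : (0 <= J)%E by apply: integral_ge0 => a Aa; rewrite lee_fin sqr_ge0.
  have JC : (J <= C%:E)%E.
    rewrite /J (@le_trans _ _ (\int[@lebesgue_measure R]_(a in A) (C%:E * (pi s a)%:E))%E) //.
      apply: (ge0_le_integral _ mAl).
      - by move=> a Aa; rewrite lee_fin sqr_ge0.
      - by apply/measurable_EFinP; exact: measurable_funX.
      - by apply: measurable_funeM; exact/measurable_EFinP.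
      - by move=> a Aa; rewrite -?EFinM lee_fin expr2 ler_wpM2r ?pge0 ?ple.
    by rewrite (integralZl mAl ipi) /= p1 mule1.
  have Jfin : J \is a fin_num by rewrite ge0_fin_numE // (le_lt_trans JC) ?ltry.
  exists (fine J); split.
    by rewrite -lee_fin -(lee_fin _ C) fineK // J0 JC.
  apply/eqP; rewrite -eqe -(hB s) hobj /bellman_obj.
  rewrite (@eq_integral _ _ _ (@lebesgue_measure R) A (fun a => ((c s + mu)%R%:E * (EFin \o pi s) a
          + mu%:E * (EFin \o (fun a => (pi s a ^+ 2)%R)) a)%E)); last first.
    move=> a /[!inE] Aa /=; rewrite -!EFinM -EFinD; congr EFin.
    rewrite -/Q; by case: (hk s a Aa) => [[-> _]|->]; ring.
  rewrite integralD //; [|exact: integrableZl|exact: integrableZl].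
  rewrite !integralZl //= p1 mule1 -/J -(fineK Jfin) -EFinM -EFinD.
  by [].
have [j hj] := boolp.choice hint.
exists (fun s => c s + mu - V s).
exists (fun s a => V s - Q s a + mu * (2 * pi s a - 1) + (c s + mu - V s)).
split; [|split; [|split]].
- move=> s; have [/andP[j0 jC] ->] := hj s.
  apply/andP; split; nra.
- move=> s a Aa; case: (hk s a Aa) => [[-> h]|->]; lra.
- move=> s a Aa; case: (hk s a Aa) => [[-> h]|->]; first by rewrite mulr0.
  have -> : forall x y : R, V s - (2 * mu * x + y) + mu * (2 * x - 1) + (y + mu - V s) = 0.
    by move=> *; ring.
  by rewrite mul0r.
- by move=> s a Aa; ring.
Qed.
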